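(* Let $I$ be a non-degenerate interval and $f:I\to\mathbb{R}$ continuous with a monotone graph. Then for every $x\in I$ the approximate upper right Dini derivative of $f$ at $x$ equals the upper right Dini derivative $\limsup_{y\to x+}\frac{f(y)-f(x)}{y-x}$; and likewise each of the other three approximate Dini derivatives equals the corresponding Dini derivative at every point.
   Context: The graph $\{(x,f(x)):x\in I\}\subseteq\mathbb{R}^2$ carries the Euclidean metric; a metric space is monotone if there are a linear order $<$ and $c>0$ with $d(x,y)\le c\,d(x,z)$ whenever $x<y<z$. The approximate upper right Dini derivative is $\overline{f}^+_{ap}(x)=\inf\{t:\lim_{\delta\to0+}\delta^{-1}\lambda(\{y\in(x,x+\delta):\frac{f(y)-f(x)}{y-x}\le t\})=1\}$ ($\lambda$ Lebesgue measure); the other three approximate Dini derivatives are defined analogously. *)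

(* Defs.v *)
From HB Require Import structures.
From mathcomp Require Import all_boot all_order all_algebra.
From mathcomp Require Import all_classical all_reals all_analysis.
Set Implicit Arguments. Unset Strict Implicit. Unset Printing Implicit Defensive.
Import Order.TTheory GRing.Theory Num.Theory.
Import numFieldNormedType.Exports.
Local Open Scope classical_set_scope.
Local Open Scope ring_scope.

Section Defs.
Variable R : realType.

Definition nondegenerate_p41 (I : interval R) : Prop :=
  exists a b : R, a \in I /\ b \in I /\ a < b.

Definition graph_p41 (I : interval R) (f : R -> R) : set (R * R) :=
  [set p | p.1 \in I /\ p.2 = f p.1].

Definition dist2_p41 (p q : R * R) : R :=
  Num.sqrt ((p.1 - q.1) ^+ 2 + (p.2 - q.2) ^+ 2).

Definition strict_linear_order {T} (S : set T) (lt : T -> T -> Prop) : Prop :=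
  (forall x, S x -> ~ lt x x) /\
  (forall x y z, S x -> S y -> S z -> lt x y -> lt y z -> lt x z) /\
  (forall x y, S x -> S y -> x <> y -> lt x y \/ lt y x).

Definition monotone_metric (S : set (R * R)) : Prop :=
  exists (lt : R * R -> R * R -> Prop) (c : R),
    strict_linear_order S lt /\ 0 < c /\
    forall x y z, S x -> S y -> S z -> lt x y -> lt y z ->
      dist2_p41 x y <= c * dist2_p41 x z.

Definition dquot (f : R -> R) (x y : R) : R := (f y - f x) / (y - x).

(* Dini derivatives (values of f outside I are ignored) *)
Definition dini_upper_right (I : interval R) (f : R -> R) (x : R) : \bar R :=
  ereal_inf [set ereal_sup [set (dquot f x y)%:E | y in [set y | y \in I /\ x < y < x + d]]
            | d in [set d : R | 0 < d]].
Definition dini_lower_right (I : interval R) (f : R -> R) (x : R) : \bar R :=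
  ereal_sup [set ereal_inf [set (dquot f x y)%:E | y in [set y | y \in I /\ x < y < x + d]]
            | d in [set d : R | 0 < d]].
Definition dini_upper_left (I : interval R) (f : R -> R) (x : R) : \bar R :=
  ereal_inf [set ereal_sup [set (dquot f x y)%:E | y in [set y | y \in I /\ x - d < y < x]]
            | d in [set d : R | 0 < d]].
Definition dini_lower_left (I : interval R) (f : R -> R) (x : R) : \bar R :=
  ereal_sup [set ereal_inf [set (dquot f x y)%:E | y in [set y | y \in I /\ x - d < y < x]]
            | d in [set d : R | 0 < d]].

Definition right_density_one (A : set R) (x : R) : Prop :=
  (fun d : R => (lebesgue_measure (A `&` `]x, (x + d)%R[) * (d^-1)%:E)%E) @ 0^'+ --> 1%E.
Definition left_density_one (A : set R) (x : R) : Prop :=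
  (fun d : R => (lebesgue_measure (A `&` `](x - d)%R, x[) * (d^-1)%:E)%E) @ 0^'+ --> 1%E.

Definition ap_upper_right (I : interval R) (f : R -> R) (x : R) : \bar R :=
  ereal_inf [set t%:E | t in [set t : R |
    right_density_one [set y | y \in I /\ dquot f x y <= t] x]].
Definition ap_lower_right (I : interval R) (f : R -> R) (x : R) : \bar R :=
  ereal_sup [set t%:E | t in [set t : R |
    right_density_one [set y | y \in I /\ t <= dquot f x y] x]].
Definition ap_upper_left (I : interval R) (f : R -> R) (x : R) : \bar R :=
  ereal_inf [set t%:E | t in [set t : R |
    left_density_one [set y | y \in I /\ dquot f x y <= t] x]].
Definition ap_lower_left (I : interval R) (f : R -> R) (x : R) : \bar R :=
  ereal_sup [set t%:E | t in [set t : R |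
    left_density_one [set y | y \in I /\ t <= dquot f x y] x]].

End Defs.

(* Main.v *)
Require Import Defs.
From HB Require Import structures.
From mathcomp Require Import all_boot all_order all_algebra.
From mathcomp Require Import all_classical all_reals all_analysis.
From mathcomp Require Import ring lra.
Import Order.TTheory GRing.Theory Num.Theory.
Import numFieldNormedType.Exports.
Local Open Scope classical_set_scope.
Local Open Scope ring_scope.
Section S.
Variable R : realType.
Lemma cont_eps (A : set R) (f : R -> R) : {within A, continuous f} ->
  forall z, A z -> forall e : R, 0 < e ->
  exists2 d, 0 < d & forall t, A t -> `|t - z| < d -> `|f t - f z| < e.
Proof.
move=> Hc z Az e e0.
have : f @ within A (nbhs z) --> f z.
  have := Hc z. rewrite /continuous_at.
  rewrite {1}/nbhs /= nbhs_subspace_in //. 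
move=> /cvgrPdist_lt /(_ e e0).
rewrite near_withinE.
move=> /nbhs_ballP [d d0 Hd]. exists d => // t At tz.
rewrite distrC. apply: (Hd t) => //. rewrite /ball /= distrC. done.
Qed.

Lemma crossing (f : R -> R) (l r eta k : R) (P : R -> Prop) :
  l <= r -> {within `[l, r], continuous f} -> 0 < eta -> 0 <= k -> P l -> ~ P r ->
  (forall a b, a \in `[l, r] -> b \in `[l, r] -> P a -> ~ P b ->
     eta <= k * (`|a - b| + `|f a - f b|)) -> False.
Proof.
move=> lr fc eta0 k0 Pl nPr H.
pose E := [set t | t \in `[l, r] /\ P t].
have El : E l by split=> //; rewrite in_itv /= lexx lr.
have hs : has_sup E.
  split; first by exists l.
  by exists r => t [] /[!in_itv] /= /andP[].
set s := sup E.
have ls : l <= s := sup_upper_bound hs El.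
have sr : s <= r.
  apply: sup_le_ub; first by exists l.
  by move=> t [] /[!in_itv] /= /andP[].
have sin : s \in `[l, r] by rewrite in_itv /= ls sr.
pose eps := eta / (4 * (k + 1)).
have k1 : 0 < 4 * (k + 1) by lra.
have eps0 : 0 < eps by rewrite divr_gt0.
have e4 : 4 * eps * (k + 1) = eta.
  have hk : k + 1 != 0 by rewrite gt_eqF //; lra.
  rewrite /eps; field.
  by rewrite hk.
have [d d0 Hd] := @cont_eps _ f fc s sin eps eps0.
pose d' := Num.min d eps.
have d'0 : 0 < d' by rewrite lt_min d0 eps0.
have d'd : d' <= d by rewrite ge_min lexx.
have d'e : d' <= eps by rewrite ge_min lexx orbT.
have [a [ain Pa] sa] := sup_adherent d'0 hs.
have as' : a <= s := sup_upper_bound hs (conj ain Pa).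
rewrite -/s in sa.
have [b [bin nPb bs]] : exists b, [/\ b \in `[l, r], ~ P b & `|b - s| < d'].
  case: (ltP s r) => [sr'|rs].
    exists (Num.min r (s + d' / 2)).
    have hb1 : s < Num.min r (s + d' / 2) by rewrite lt_min sr' /=; lra.
    have hb2 : Num.min r (s + d' / 2) <= s + d' / 2 by rewrite ge_min lexx orbT.
    have hb3 : Num.min r (s + d' / 2) <= r by rewrite ge_min lexx.
    split.
    - by rewrite in_itv /= hb3 andbT; apply: le_trans (ltW hb1).
    - move=> Pb.
      have : Num.min r (s + d' / 2) <= s.
        apply: sup_upper_bound => //; split => //.
        by rewrite in_itv /= hb3 andbT; apply: le_trans (ltW hb1).
      by rewrite leNgt hb1.
    - rewrite ger0_norm; last by rewrite subr_ge0 ltW.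
      lra.
  have -> : s = r by apply/eqP; rewrite eq_le sr rs.
  exists r; split => //; first by rewrite in_itv /= lr lexx.
  by rewrite subrr normr0.
have Hab := H a b ain bin Pa nPb.
have h1 : `|a - s| < d'.
  by rewrite distrC ger0_norm ?subr_ge0 //; lra.
have h2 : `|f a - f s| < eps by apply: Hd => //; lra.
have h3 : `|f b - f s| < eps by apply: Hd => //; lra.
have h4 : `|a - b| <= `|a - s| + `|b - s|.
  by rewrite (distrC b s); apply: (le_trans _ (ler_normD _ _)); rewrite addrA subrK.
have h5 : `|f a - f b| <= `|f a - f s| + `|f b - f s|.
  by rewrite (distrC (f b) (f s)); apply: (le_trans _ (ler_normD _ _)); rewrite addrA subrK.
have h6 : `|a - b| + `|f a - f b| <= 4 * eps.
  lra.
have h7 : k * (`|a - b| + `|f a - f b|) <= k * (4 * eps) by rewrite ler_wpM2l.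
lra.
Qed.

Lemma sqrt_ge2 (a b : R) : `|b| <= Num.sqrt (a ^+ 2 + b ^+ 2).
Proof.
rewrite -sqrtr_sqr ler_sqrt; last by rewrite addr_ge0 // sqr_ge0.
by rewrite lerDr sqr_ge0.
Qed.
Lemma sqrt_ge1 (a b : R) : `|a| <= Num.sqrt (a ^+ 2 + b ^+ 2).
Proof. by rewrite addrC sqrt_ge2. Qed.
Lemma sqrt_le (a b : R) : Num.sqrt (a ^+ 2 + b ^+ 2) <= `|a| + `|b|.
Proof.
rewrite -[X in _ <= X]ger0_norm ?addr_ge0 // -sqrtr_sqr ler_sqrt; last by rewrite sqr_ge0.
rewrite -[a ^+ 2]real_normK ?num_real // -[b ^+ 2]real_normK ?num_real //.
have ha := normr_ge0 a; have hb := normr_ge0 b. nra.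
Qed.

Lemma in_I_between (I : interval R) (a b z : R) : a \in I -> b \in I -> a <= z <= b -> z \in I.
Proof. by move=> aI bI azb; apply: (@interval_is_interval _ I a b). Qed.

Lemma nocross (I : interval R) (f : R -> R) (lt : R * R -> R * R -> Prop) (c : R) :
  strict_linear_order (graph_p41 I f) lt -> 0 < c ->
  (forall x y z, graph_p41 I f x -> graph_p41 I f y -> graph_p41 I f z ->
      lt x y -> lt y z -> dist2_p41 x y <= c * dist2_p41 x z) ->
  {within [set y | y \in I], continuous f} ->
  forall l r w0, l \in I -> r \in I -> w0 \in I -> l <= r -> (w0 < l \/ r < w0) ->
  ~ (lt (l, f l) (w0, f w0) /\ lt (w0, f w0) (r, f r)) /\
  ~ (lt (w0, f w0) (l, f l) /\ lt (r, f r) (w0, f w0)).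
Proof.
move=> [irr [trans tot]] c0 mono fc l r w0 lI rI wI lr hw.
have Gin : forall t, t \in I -> graph_p41 I f (t, f t) by move=> t tI; split.
have sub : `[l, r] `<=` [set y | y \in I].
  move=> t tin; apply: (@in_I_between I l r t lI rI).
  by move: tin; rewrite /= in_itv /=.
have fc' := continuous_subspaceW sub fc.
have [eta eta0 Heta] : exists2 eta, 0 < eta & forall a, a \in `[l, r] -> eta <= `|a - w0|.
  case: hw => hw.
    exists (l - w0); first by lra.
    move=> a /[!in_itv] /= /andP[la ar]; rewrite ger0_norm; lra.
  exists (w0 - r); first by lra.
  move=> a /[!in_itv] /= /andP[la ar]; rewrite ler0_norm; lra.
have neq : forall a, a \in `[l, r] -> (a, f a) <> (w0, f w0).
  move=> a /[!in_itv] /= /andP[la ar] [aw _]; rewrite aw in la ar; case: hw; lra.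
pose P t := lt (t, f t) (w0, f w0).
have H0 : forall a b, a \in `[l, r] -> b \in `[l, r] -> P a -> ~ P b ->
    eta <= c * (`|a - b| + `|f a - f b|).
  move=> a b ain bin Pa nPb.
  have aI := sub a ain; have bI := sub b bin.
  have wb : lt (w0, f w0) (b, f b).
    have [h|h] := tot (b, f b) (w0, f w0) (Gin b bI) (Gin w0 wI) (neq b bin).
      by exfalso; exact: (nPb h).
    exact: h.
  have := mono _ _ _ (Gin a aI) (Gin w0 wI) (Gin b bI) Pa wb.
  rewrite /dist2_p41 /= => hm.
  have h1 := Heta a ain.
  have h2 := sqrt_ge1 (a - w0) (f a - f w0).
  have h3 := sqrt_le (a - b) (f a - f b).
  have h4 : c * Num.sqrt ((a - b) ^+ 2 + (f a - f b) ^+ 2) <= c * (`|a - b| + `|f a - f b|).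
    by rewrite ler_wpM2l // ltW.
  lra.
split.
- move=> [h1 h2].
  apply: (@crossing f l r eta c P lr fc' eta0 (ltW c0)) => //.
  move=> Pr; apply: (irr (r, f r) (Gin r rI)).
  exact: (trans _ _ _ (Gin r rI) (Gin w0 wI) (Gin r rI) Pr h2).
- move=> [h1 h2].
  apply: (@crossing f l r eta c (fun t => ~ P t) lr fc' eta0 (ltW c0)).
  + move=> Pl; apply: (irr (l, f l) (Gin l lI)).
    exact: (trans _ _ _ (Gin l lI) (Gin w0 wI) (Gin l lI) Pl h1).
  + by apply.
  + move=> a b ain bin nPa nnPb.
    have Pb : P b by apply: contrapT.
    have := H0 b a bin ain Pb nPa.
    by rewrite (distrC b a) (distrC (f b) (f a)).
Qed.

Lemma spike_of (I : interval R) (f : R -> R) :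
  monotone_metric (graph_p41 I f) ->
  {within [set y | y \in I], continuous f} ->
  exists2 c, 0 < c & forall a y b, a \in I -> b \in I -> a < y < b ->
    `|f y - f a| <= c * (`|b - a| + `|f b - f a|) \/
    `|f y - f b| <= c * (`|b - a| + `|f b - f a|).
Proof.
move=> [lt [c [slo [c0 mono]]]] fc.
have slo' := slo; move: slo' => [irr [trans tot]].
exists c => // a y b aI bI /andP[ay yb].
have yI : y \in I by apply: (@in_I_between I a b y aI bI); rewrite !ltW.
have Gin : forall t, t \in I -> graph_p41 I f (t, f t) by move=> t tI; split.
have [n1 n2] := @nocross I f lt c slo c0 mono fc _ _ _ aI yI bI (ltW ay) (or_intror yb).
have [n3 n4] := @nocross I f lt c slo c0 mono fc _ _ _ yI bI aI (ltW yb) (or_introl ay).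
have nab : (a, f a) <> (b, f b) by case; lra.
have nay : (a, f a) <> (y, f y) by case; lra.
have nyb : (y, f y) <> (b, f b) by case; lra.
have bnd1 : forall p q, Num.sqrt ((p - q) ^+ 2 + (f p - f q) ^+ 2) <= `|b - a| + `|f b - f a| ->
   True by [].
have dab : dist2_p41 (a, f a) (b, f b) <= `|b - a| + `|f b - f a|.
  by rewrite /dist2_p41 /= (distrC b a) (distrC (f b) (f a)) sqrt_le.
have dba : dist2_p41 (b, f b) (a, f a) <= `|b - a| + `|f b - f a|.
  by rewrite /dist2_p41 /= sqrt_le.
case: (tot _ _ (Gin a aI) (Gin b bI) nab) => hab.
-
  have hyb : lt (y, f y) (b, f b).
    case: (tot _ _ (Gin y yI) (Gin b bI) nyb) => // hby.
    by exfalso; apply: n1.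
  have hay : lt (a, f a) (y, f y).
    case: (tot _ _ (Gin a aI) (Gin y yI) nay) => // hya.
    by exfalso; apply: n3.
  left.
  have := mono _ _ _ (Gin a aI) (Gin y yI) (Gin b bI) hay hyb.
  have h1 : `|f y - f a| <= dist2_p41 (a, f a) (y, f y).
    by rewrite /dist2_p41 /= distrC sqrt_ge2.
  have h2 : c * dist2_p41 (a, f a) (b, f b) <= c * (`|b - a| + `|f b - f a|).
    by rewrite ler_wpM2l // ltW.
  lra.
- have hby : lt (b, f b) (y, f y).
    case: (tot _ _ (Gin b bI) (Gin y yI) (fun e => nyb (esym e))) => // hyb.
    by exfalso; apply: n2.
  have hya : lt (y, f y) (a, f a).
    case: (tot _ _ (Gin y yI) (Gin a aI) (fun e => nay (esym e))) => // hay.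
    by exfalso; apply: n4.
  right.
  have := mono _ _ _ (Gin b bI) (Gin y yI) (Gin a aI) hby hya.
  have h1 : `|f y - f b| <= dist2_p41 (b, f b) (y, f y).
    by rewrite /dist2_p41 /= distrC sqrt_ge2.
  have h2 : c * dist2_p41 (b, f b) (a, f a) <= c * (`|b - a| + `|f b - f a|).
    by rewrite ler_wpM2l // ltW.
  lra.
Qed.

Local Open Scope ereal_scope.
Lemma le_ereal_of (a b : \bar R) :
  (forall r : R, b < r%:E -> a <= r%:E) -> a <= b.
Proof.
case: b => [rb| |] H.
- case: a H => [ra| |] H.
  + rewrite lee_fin; apply/ler_addgt0Pr => e e0.
    have := H (rb + e)%R; rewrite lte_fin lee_fin; apply; lra.
  + exfalso; have := H (rb + 1)%R; rewrite lte_fin => /(_ ltac:(lra)).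
    by rewrite leNgt ltry.
  + by rewrite leNye.
- by rewrite leey.
- case: a H => [ra| |] H.
  + have := H (ra - 1)%R; rewrite ltNyr lee_fin => /(_ isT) h; exfalso; lra.
  + by have := H 0%R; rewrite ltNyr => /(_ isT); rewrite leNgt ltry.
  + by [].
Qed.

Lemma ge_ereal_of (a b : \bar R) :
  (forall r : R, r%:E < b -> r%:E <= a) -> b <= a.
Proof.
case: a => [ra| |] H.
- case: b H => [rb| |] H.
  + rewrite lee_fin; apply/ler_addgt0Pr => e e0.
    have : ((rb - e) <= ra)%R by rewrite -lee_fin; apply: H; rewrite lte_fin; lra.
    lra.
  + exfalso; have := H (ra + 1)%R; rewrite ltry lee_fin => /(_ isT) h; lra.
  + by rewrite leNye.
- by rewrite leey.
- case: b H => [rb| |] H.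
  + have := H (rb - 1)%R; rewrite lte_fin => /(_ ltac:(lra)).
    by rewrite leNgt ltNyr.
  + by have := H 0%R; rewrite ltry => /(_ isT); rewrite leNgt ltNyr.
  + by [].
Qed.

Section Dini.
Variables (W : R -> set R) (q : R -> R).

Lemma E1 (t : R) :
  ereal_inf [set ereal_sup [set (q y)%:E | y in W d] | d in [set d : R | (0 < d)%R]] < t%:E ->
  exists2 d, (0 < d)%R & forall y, W d y -> (q y <= t)%R.
Proof.
move=> /ereal_inf_lt [_ [d d0 <-] hlt]; exists d => // y Wy.
rewrite -lee_fin; apply: le_trans (ltW hlt).
by apply: ereal_sup_ubound; exists y.
Qed.

Lemma E2 (t d : R) : (0 < d)%R -> (forall y, W d y -> (q y <= t)%R) ->
  ereal_inf [set ereal_sup [set (q y)%:E | y in W d] | d in [set d : R | (0 < d)%R]] <= t%:E.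
Proof.
move=> d0 H; apply: le_trans (ereal_inf_lbound _) _; first by exists d.
by apply: ge_ereal_sup => _ [y Wy <-]; rewrite lee_fin; apply: H.
Qed.

Lemma E3 (t : R) :
  t%:E < ereal_sup [set ereal_inf [set (q y)%:E | y in W d] | d in [set d : R | (0 < d)%R]] ->
  exists2 d, (0 < d)%R & forall y, W d y -> (t <= q y)%R.
Proof.
move=> /ereal_sup_gt [_ [d d0 <-] hlt]; exists d => // y Wy.
rewrite -lee_fin; apply: le_trans (ltW hlt) _.
by apply: ereal_inf_lbound; exists y.
Qed.

Lemma E4 (t d : R) : (0 < d)%R -> (forall y, W d y -> (t <= q y)%R) ->
  t%:E <= ereal_sup [set ereal_inf [set (q y)%:E | y in W d] | d in [set d : R | (0 < d)%R]].
Proof.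
move=> d0 H; apply: le_trans _ (ereal_sup_ubound _); last by exists d.
by apply: le_ereal_inf_tmp => _ [y Wy <-]; rewrite lee_fin; apply: H.
Qed.

Lemma apU (P : R -> Prop) :
  (forall t, (exists2 d, (0 < d)%R & forall y, W d y -> (q y <= t)%R) -> P t) ->
  (forall s, P s -> forall t, (s < t)%R -> exists2 d, (0 < d)%R & forall y, W d y -> (q y <= t)%R) ->
  ereal_inf [set t%:E | t in P] =
  ereal_inf [set ereal_sup [set (q y)%:E | y in W d] | d in [set d : R | (0 < d)%R]].
Proof.
move=> H1 H2; apply/eqP; rewrite eq_le; apply/andP; split.
- apply: le_ereal_of => r hr.
  apply: ereal_inf_lbound; exists r => //; exact: H1 (@E1 r hr).
- apply: le_ereal_inf_tmp => _ [s Ps <-].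
  apply: le_ereal_of => r; rewrite lte_fin => sr.
  have [d d0 hd] := H2 s Ps r sr.
  exact: (@E2 r d d0 hd).
Qed.

Lemma apL (P : R -> Prop) :
  (forall t, (exists2 d, (0 < d)%R & forall y, W d y -> (t <= q y)%R) -> P t) ->
  (forall s, P s -> forall t, (t < s)%R -> exists2 d, (0 < d)%R & forall y, W d y -> (t <= q y)%R) ->
  ereal_sup [set t%:E | t in P] =
  ereal_sup [set ereal_inf [set (q y)%:E | y in W d] | d in [set d : R | (0 < d)%R]].
Proof.
move=> H1 H2; apply/eqP; rewrite eq_le; apply/andP; split.
- apply: ge_ereal_sup => _ [s Ps <-].
  apply: ge_ereal_of => r; rewrite lte_fin => sr.
  have [d d0 hd] := H2 s Ps r sr.
  exact: (@E4 r d d0 hd).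
- apply: ge_ereal_of => r hr.
  apply: ereal_sup_ubound; exists r => //; exact: H1 (@E3 r hr).
Qed.
End Dini.
Local Close Scope ereal_scope.

Lemma near_right_ex (P : R -> Prop) :
  (\forall d \near 0^'+, P d) -> exists2 e, 0 < e & forall d, 0 < d -> d < e -> P d.
Proof.
rewrite near_withinE => /nbhs_ballP [e e0 He].
exists e => // d d0 de; apply: He => //.
by rewrite /ball /= sub0r normrN ger0_norm ?ltW.
Qed.

Lemma dens_right (I : interval R) (x b0 : R) (Q : R -> Prop) : b0 \in I -> x \in I -> x < b0 ->
  (exists2 d, 0 < d & forall y, y \in I -> x < y < x + d -> Q y) ->
  right_density_one [set y | y \in I /\ Q y] x.
Proof.
move=> bI xI xb [d0 d00 H]; rewrite /right_density_one.
have Hn : \forall d \near 0^'+,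
   (lebesgue_measure ([set y | y \in I /\ Q y] `&` `]x, (x + d)%R[) * (d^-1)%:E)%E = 1%E.
  near=> d.
  have dpos : 0 < d by near: d; exact: nbhs_right_gt.
  have dlt : d < Num.min d0 (b0 - x).
    near: d; apply: nbhs_right_lt; rewrite lt_min d00 /=; lra.
  move: dlt; rewrite lt_min => /andP[dd0 db].
  have -> : [set y | y \in I /\ Q y] `&` `]x, (x + d)%R[ = [set` `]x, (x + d)%R[].
    apply/seteqP; split => z; first by case.
    move=> zin; split => //.
    have : x < z < x + d by move: zin; rewrite /= in_itv.
    move=> /andP[xz zd].
    have zI : z \in I by apply: (@in_I_between I x b0 z xI bI); apply/andP; split; lra.
    split => //; apply: H => //; apply/andP; split; lra.
  rewrite lebesgue_measure_itv /= lte_fin ifT; last by lra.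
  by rewrite -EFinD -EFinM addrAC subrr add0r divff // gt_eqF.
exact: cvg_near_cst.
Unshelve. all: by end_near.
Qed.

Lemma lm_le (A B : set R) : A `<=` B -> (lebesgue_measure A <= lebesgue_measure B)%E.
Proof.
move=> AB. rewrite /lebesgue_measure /lebesgue_stieltjes_measure /measure_extension.
exact: le_outer_measure.
Qed.

Lemma meas_gap (A : set R) (a p q b : R) : a <= p -> q <= b ->
  A `<=` [set` `]a, p[] `|` [set` `]q, b[] ->
  (lebesgue_measure A <= ((p - a) + (b - q))%:E)%E.
Proof.
move=> ap qb AS.
apply: le_trans (lm_le _ _ AS) _.
have hU : (lebesgue_measure ([set` `]a, p[] `|` [set` `]q, b[]) <=
    lebesgue_measure [set` `]a, p[] + lebesgue_measure [set` `]q, b[])%E.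
  by apply: measureU2; exact: measurable_itv.
apply: le_trans hU _.
rewrite !lebesgue_measure_itv /= !lte_fin -!EFinD.
case: ifP => h1; case: ifP => h2; rewrite ?add0e ?adde0 ?lee_fin; lra.
Qed.

Lemma gcont (I : interval R) (f : R -> R) (x s : R) :
  {within [set y | y \in I], continuous f} ->
  {within [set y | y \in I], continuous (fun z => f z - f x - s * (z - x))}.
Proof.
move=> fc z; rewrite /from_subspace.
pose T := subspace [set y : R | y \in I].
apply: (@continuousB _ _ T (fun z : T => f z - f x) (fun z : T => s * (z - x))).
  apply: (@continuousB _ _ T (f : T -> R) (fun=> f x)); first exact: fc.
  exact: cst_continuous.
apply: (@continuousM _ T (fun=> s) (fun z : T => z - x)); first exact: cst_continuous.
apply: (@continuousB _ _ T (fun z : T => (z : R)) (fun=> x)); last exact: cst_continuous.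
exact: (@continuous_subspaceT _ _ [set y : R | y \in I] (fun z : R => z) (fun _ => cvg_id) z).
Qed.

Lemma gap_meas (S : set R) (g : R -> R) (a b y w : R) :
  0 < w -> a < y - w -> y + w < b ->
  (forall z, S z -> a < z -> z < b -> g z <= 0) ->
  (forall z, y - w <= z <= y -> 0 < g z) \/ (forall z, y <= z <= y + w -> 0 < g z) ->
  (lebesgue_measure (S `&` `]a, b[) <= (b - a - w)%:E)%E.
Proof.
move=> w0 xyw ywD Sg [HA|HB].
- apply: le_trans (@meas_gap _ a (y - w) y b _ _ _) _.
  + lra.
  + lra.
  + move=> z [Sz]; rewrite /= in_itv /= => /andP[xz zD].
    have gz := Sg z Sz xz zD.
    case: (ltP z (y - w)) => h1.
      by left; rewrite /= in_itv /= xz h1.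
    case: (ltP y z) => h2.
      by right; rewrite /= in_itv /= h2 zD.
    by exfalso; have := HA z; rewrite h1 h2 => /(_ isT); lra.
  + rewrite lee_fin; lra.
- apply: le_trans (@meas_gap _ a y (y + w) b _ _ _) _.
  + lra.
  + lra.
  + move=> z [Sz]; rewrite /= in_itv /= => /andP[xz zD].
    have gz := Sg z Sz xz zD.
    case: (ltP z y) => h1.
      by left; rewrite /= in_itv /= xz h1.
    case: (ltP (y + w) z) => h2.
      by right; rewrite /= in_itv /= h2 zD.
    by exfalso; have := HB z; rewrite h1 h2 => /(_ isT); lra.
  + rewrite lee_fin; lra.
Qed.

Lemma two_zeros (I : interval R) (g : R -> R) (x b0 y w : R) :
  {within [set y | y \in I], continuous g} -> x \in I -> b0 \in I ->
  x < y - w -> y + w < b0 -> 0 < w -> 0 < g y ->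
  (exists2 z, y - w <= z <= y & g z <= 0) ->
  (exists2 z, y <= z <= y + w & g z <= 0) ->
  exists z1 z2, [/\ y - w <= z1 < y, y < z2 <= y + w, z1 \in I, z2 \in I
     & g z1 = 0 /\ g z2 = 0].
Proof.
move=> gc xI bI xyw ywb w0 gy [z1' /andP[hz1a hz1b] gz1'] [z2' /andP[hz2a hz2b] gz2'].
have inI : forall z, x <= z <= b0 -> z \in I.
  by move=> z hz; apply: (@in_I_between I x b0 z xI bI hz).
have sub1 : `[z1', y] `<=` [set y | y \in I].
  move=> u uin; apply: inI; move: uin; rewrite /= in_itv /= => /andP[? ?].
  apply/andP; split; lra.
have sub2 : `[y, z2'] `<=` [set y | y \in I].
  move=> u uin; apply: inI; move: uin; rewrite /= in_itv /= => /andP[? ?].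
  apply/andP; split; lra.
have c1 : Num.min (g z1') (g y) <= 0 <= Num.max (g z1') (g y).
  by apply/andP; split; [rewrite ge_min gz1' | rewrite le_max (ltW gy) orbT].
have c2 : Num.min (g y) (g z2') <= 0 <= Num.max (g y) (g z2').
  by apply/andP; split; [rewrite ge_min gz2' orbT | rewrite le_max (ltW gy)].
have [z1 z1in gz1] := IVT hz1b (continuous_subspaceW sub1 gc) c1.
have [z2 z2in gz2] := IVT hz2a (continuous_subspaceW sub2 gc) c2.
move: z1in z2in; rewrite !in_itv /= => /andP[z1a z1b] /andP[z2a z2b].
have z1y : z1 < y.
  by rewrite lt_neqAle z1b andbT; apply/eqP => e; move: gz1; rewrite e => e'; lra.
have yz2 : y < z2.
  by rewrite lt_neqAle z2a andbT; apply/eqP => e; move: gz2; rewrite -e => e'; lra.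
exists z1, z2; split.
- apply/andP; split; lra.
- apply/andP; split; lra.
- apply: inI; apply/andP; split; lra.
- apply: inI; apply/andP; split; lra.
- by [].
Qed.

Lemma spike_arith (c s t k x y z z1 z2 fy fx : R) :
  0 < c -> 0 < k -> x < y -> s < t ->
  k * (`|s| + 2 * (c * (1 + `|s|)) + 1) <= (t - s) / 2 ->
  (t - s) * (y - x) < fy - fx - s * (y - x) ->
  y - k * (y - x) <= z1 < y -> y < z2 <= y + k * (y - x) ->
  y - k * (y - x) <= z <= y + k * (y - x) ->
  `|fy - (fx + s * (z - x))| <=
     c * (`|z2 - z1| + `|(fx + s * (z2 - x)) - (fx + s * (z1 - x))|) -> False.
Proof.
move=> c0 k0 xy st kK gy /andP[z1a z1b] /andP[z2a z2b] /andP[za zb] hsp.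
have A0 : 0 <= `|s| := normr_ge0 s.
have cA : 0 <= c * (1 + `|s|) by rewrite mulr_ge0 ?ltW //; lra.
have kh0 : 0 < k * (y - x) by rewrite mulr_gt0 //; lra.
have ts0 : 0 < (t - s) * (y - x) by rewrite mulr_gt0 //; lra.
have e21 : (fx + s * (z2 - x)) - (fx + s * (z1 - x)) = s * (z2 - z1) by ring.
have n21 : `|z2 - z1| = z2 - z1 by rewrite ger0_norm //; lra.
rewrite e21 normrM n21 in hsp.
have R1 : (z2 - z1) + `|s| * (z2 - z1) <= (1 + `|s|) * (2 * (k * (y - x))).
  have : (1 + `|s|) * (z2 - z1) <= (1 + `|s|) * (2 * (k * (y - x))).
    by rewrite ler_wpM2l //; lra.
  lra.
have R2 : c * ((z2 - z1) + `|s| * (z2 - z1)) <= c * ((1 + `|s|) * (2 * (k * (y - x)))).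
  by rewrite ler_wpM2l // ltW.
have e1 : fy - (fx + s * (z - x)) = (fy - fx - s * (y - x)) + s * (y - z) by ring.
have n1 : `|s * (y - z)| <= `|s| * (k * (y - x)).
  rewrite normrM ler_wpM2l //.
  rewrite ler_norml; apply/andP; split; lra.
have n2 : - `|s * (y - z)| <= s * (y - z) by rewrite lerNnormlW.
have n3 : fy - (fx + s * (z - x)) <= `|fy - (fx + s * (z - x))| by exact: ler_norm.
have kK' : k * (`|s| + 2 * (c * (1 + `|s|)) + 1) * (y - x) <= (t - s) / 2 * (y - x).
  by rewrite ler_wpM2r //; lra.
have expand : c * ((1 + `|s|) * (2 * (k * (y - x)))) =
   k * (y - x) * (2 * (c * (1 + `|s|)))  by ring.
have expand2 : k * (`|s| + 2 * (c * (1 + `|s|)) + 1) * (y - x) =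
   `|s| * (k * (y - x)) + k * (y - x) * (2 * (c * (1 + `|s|))) + k * (y - x) by ring.
have expand3 : (t - s) / 2 * (y - x) = (t - s) * (y - x) / 2 by rewrite mulrAC.
lra.
Qed.

Lemma kchoice (c s t : R) : 0 < c -> s < t ->
  exists k, [/\ 0 < k, k <= 1 / 2 &
     k * (`|s| + 2 * (c * (1 + `|s|)) + 1) <= (t - s) / 2].
Proof.
move=> c0 st.
have A0 : 0 <= `|s| := normr_ge0 s.
have cA : 0 <= c * (1 + `|s|) by rewrite mulr_ge0 ?ltW //; lra.
pose K := `|s| + 2 * (c * (1 + `|s|)) + 1.
have K0 : 0 < K by rewrite /K; lra.
exists (Num.min (1/2) ((t - s) / (2 * K))); split.
- rewrite lt_min; apply/andP; split; first lra.
  by rewrite divr_gt0 //; lra.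
- by rewrite ge_min lexx.
- have : Num.min (1/2) ((t - s) / (2 * K)) <= (t - s) / (2 * K) by rewrite ge_min lexx orbT.
  rewrite -(ler_pM2r K0) => h; apply: le_trans h _.
  have -> : (t - s) / (2 * K) * K = (t - s) / 2.
    have KK : K != 0 by rewrite gt_eqF.
    by field.
  by [].
Qed.

Lemma spike_right (I : interval R) (f : R -> R) (c x b0 s t : R) :
  0 < c -> {within [set y | y \in I], continuous f} ->
  (forall a y b, a \in I -> b \in I -> a < y < b ->
    `|f y - f a| <= c * (`|b - a| + `|f b - f a|) \/
    `|f y - f b| <= c * (`|b - a| + `|f b - f a|)) ->
  b0 \in I -> x \in I -> x < b0 -> s < t ->
  right_density_one [set y | y \in I /\ dquot f x y <= s] x ->
  exists2 d, 0 < d & forall y, y \in I -> x < y < x + d -> dquot f x y <= t.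
Proof.
move=> c0 fc Sp bI xI xb st Hd.
apply: contrapT => Hn.
have [k [k0 k12 kK]] := @kchoice c s t c0 st.
pose P := fun d : R =>
  ((1 - k / 4)%:E < lebesgue_measure ([set y | y \in I /\ (dquot f x y <= s)%R] `&` `]x, (x + d)%R[) * (d^-1)%:E)%E.
have hP : \forall d \near 0^'+, P d.
  have hN : nbhs 1%E [set z : \bar R | ((1 - k / 4)%:E < z)%E].
    by apply: open_ereal_gt'; rewrite lte_fin; lra.
  exact: (Hd _ hN).
have [e0 e00 He] := near_right_ex (fun d => P d) hP.
pose d' := Num.min (e0 / 2) ((b0 - x) / 2).
have d'0 : 0 < d' by rewrite /d' lt_min; apply/andP; split; lra.
have d'1 : d' <= e0 / 2 by rewrite /d' ge_min lexx.
have d'2 : d' <= (b0 - x) / 2 by rewrite /d' ge_min lexx orbT.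
have [y [yI xy yd ty]] : exists y, [/\ y \in I, x < y, y < x + d' & t < dquot f x y].
  apply: contrapT => hy; apply: Hn; exists d' => // y yI /andP[xy yd].
  rewrite leNgt; apply/negP => ty; apply: hy; by exists y.
have hq : t * (y - x) < f y - f x.
  by move: ty; rewrite /dquot ltr_pdivlMr // subr_gt0.
pose g z := f z - f x - s * (z - x).
have gy : (t - s) * (y - x) < g y by rewrite /g; lra.
have ts0 : 0 < (t - s) * (y - x) by rewrite mulr_gt0 //; lra.
have kh0 : 0 < k * (y - x) by rewrite mulr_gt0 //; lra.
have kh : k * (y - x) <= (y - x) / 2.
  have : k * (y - x) <= 1 / 2 * (y - x) by rewrite ler_wpM2r //; lra.
  lra.
have Sg : forall z, [set y | y \in I /\ (dquot f x y <= s)%R] z -> x < z -> g z <= 0.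
  move=> z [_ zs] xz; move: zs; rewrite /dquot ler_pdivrMr ?subr_gt0 // /g; lra.
have D0 : 0 < 2 * (y - x) by lra.
have De : 2 * (y - x) < e0 by lra.
have Db : y + k * (y - x) < b0 by lra.
have HP := He (2 * (y - x)) D0 De.
have hm : (lebesgue_measure ([set y | y \in I /\ (dquot f x y <= s)%R] `&` `]x, (x + 2 * (y - x))%R[)
            <= (x + 2 * (y - x) - x - k * (y - x))%:E)%E.
  apply: (@gap_meas _ g x (x + 2 * (y - x)) y (k * (y - x))) => //; [lra | lra | | ].
    by move=> z Sz xz _; apply: Sg.
  have [HA|HA] := pselect (forall z, y - k * (y - x) <= z <= y -> 0 < g z); first by left.
  have [HB|HB] := pselect (forall z, y <= z <= y + k * (y - x) -> 0 < g z); first by right.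
  exfalso.
  have ex1 : exists2 z, y - k * (y - x) <= z <= y & g z <= 0.
    apply: contrapT => H; apply: HA => z hz; rewrite ltNge; apply/negP => gz.
    by apply: H; exists z.
  have ex2 : exists2 z, y <= z <= y + k * (y - x) & g z <= 0.
    apply: contrapT => H; apply: HB => z hz; rewrite ltNge; apply/negP => gz.
    by apply: H; exists z.
  have [z1 [z2 [hz1 hz2 z1I z2I [gz1 gz2]]]] :=
    @two_zeros I g x b0 y (k * (y - x)) (@gcont I f x s fc) xI bI (ltac:(lra)) Db kh0 (lt_trans ts0 gy) ex1 ex2.
  have fz1 : f z1 = f x + s * (z1 - x) by move: gz1; rewrite /g => e; lra.
  have fz2 : f z2 = f x + s * (z2 - x) by move: gz2; rewrite /g => e; lra.
  have gyE : (t - s) * (y - x) < f y - f x - s * (y - x) by exact: gy.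
  move: hz1 hz2 => /andP[z1a z1b] /andP[z2a z2b].
  case: (Sp z1 y z2 z1I z2I (ltac:(by rewrite z1b z2a))); rewrite fz1 fz2 => hsp.
  - apply: (@spike_arith c s t k x y z1 z1 z2 (f y) (f x)) => //.
    + by rewrite z1a z1b.
    + by rewrite z2a z2b.
    + apply/andP; split; lra.
  - apply: (@spike_arith c s t k x y z2 z1 z2 (f y) (f x)) => //.
    + by rewrite z1a z1b.
    + by rewrite z2a z2b.
    + apply/andP; split; lra.
have hD : (0 <= ((2 * (y - x))^-1)%:E)%E by rewrite lee_fin invr_ge0 ltW.
have := lee_wpmul2r hD hm.
move: HP; rewrite /P => HP h2.
have := lt_le_trans HP h2; rewrite -EFinM lte_fin.
have -> : (x + 2 * (y - x) - x - k * (y - x)) * (2 * (y - x))^-1 = (2 - k) / 2.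
  have yx : y - x != 0 by rewrite gt_eqF // subr_gt0.
  by field.
lra.
Qed.

Lemma dens_left (I : interval R) (x a0 : R) (Q : R -> Prop) : a0 \in I -> x \in I -> a0 < x ->
  (exists2 d, 0 < d & forall y, y \in I -> x - d < y < x -> Q y) ->
  left_density_one [set y | y \in I /\ Q y] x.
Proof.
move=> aI xI ax [d0 d00 H]; rewrite /left_density_one.
apply: cvg_near_cst.
near=> d.
have dpos : 0 < d by near: d; exact: nbhs_right_gt.
have dlt : d < Num.min d0 (x - a0).
  near: d; apply: nbhs_right_lt; rewrite lt_min d00 /=; lra.
move: dlt; rewrite lt_min => /andP[dd0 db].
have -> : [set y | y \in I /\ Q y] `&` `](x - d)%R, x[ = [set` `](x - d)%R, x[].
  apply/seteqP; split => z; first by case.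
  move=> zin; split => //.
  have : x - d < z < x by move: zin; rewrite /= in_itv.
  move=> /andP[xz zd].
  have zI : z \in I by apply: (@in_I_between I a0 x z aI xI); apply/andP; split; lra.
  split => //; apply: H => //; apply/andP; split; lra.
rewrite lebesgue_measure_itv /= lte_fin ifT; last by lra.
by rewrite -EFinD -EFinM opprB addrC subrK divff // gt_eqF.
Unshelve. all: by end_near.
Qed.

Lemma contN (A : set R) (f : R -> R) :
  {within A, continuous f} -> {within A, continuous (fun z => - f z)}.
Proof.
move=> fc z; rewrite /from_subspace.
apply: (@continuousN _ _ (subspace A) (f : subspace A -> R)); exact: fc.
Qed.

Lemma spike_arith_left (c s t k x y z z1 z2 fy fx : R) :
  0 < c -> 0 < k -> y < x -> s < t ->
  k * (`|s| + 2 * (c * (1 + `|s|)) + 1) <= (t - s) / 2 ->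
  (t - s) * (x - y) < - (fy - fx - s * (y - x)) ->
  y - k * (x - y) <= z1 < y -> y < z2 <= y + k * (x - y) ->
  y - k * (x - y) <= z <= y + k * (x - y) ->
  `|fy - (fx + s * (z - x))| <=
     c * (`|z2 - z1| + `|(fx + s * (z2 - x)) - (fx + s * (z1 - x))|) -> False.
Proof.
move=> c0 k0 xy st kK gy /andP[z1a z1b] /andP[z2a z2b] /andP[za zb] hsp.
have A0 : 0 <= `|s| := normr_ge0 s.
have cA : 0 <= c * (1 + `|s|) by rewrite mulr_ge0 ?ltW //; lra.
have kh0 : 0 < k * (x - y) by rewrite mulr_gt0 //; lra.
have ts0 : 0 < (t - s) * (x - y) by rewrite mulr_gt0 //; lra.
have e21 : (fx + s * (z2 - x)) - (fx + s * (z1 - x)) = s * (z2 - z1) by ring.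
have n21 : `|z2 - z1| = z2 - z1 by rewrite ger0_norm //; lra.
rewrite e21 normrM n21 in hsp.
have R1 : (z2 - z1) + `|s| * (z2 - z1) <= (1 + `|s|) * (2 * (k * (x - y))).
  have : (1 + `|s|) * (z2 - z1) <= (1 + `|s|) * (2 * (k * (x - y))).
    by rewrite ler_wpM2l //; lra.
  lra.
have R2 : c * ((z2 - z1) + `|s| * (z2 - z1)) <= c * ((1 + `|s|) * (2 * (k * (x - y)))).
  by rewrite ler_wpM2l // ltW.
have n1 : `|s * (y - z)| <= `|s| * (k * (x - y)).
  rewrite normrM ler_wpM2l //.
  rewrite ler_norml; apply/andP; split; lra.
have n2 : s * (y - z) <= `|s * (y - z)| by exact: ler_norm.
have n3 : - (fy - (fx + s * (z - x))) <= `|fy - (fx + s * (z - x))|.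
  by rewrite -normrN ler_norm.
have kK' : k * (`|s| + 2 * (c * (1 + `|s|)) + 1) * (x - y) <= (t - s) / 2 * (x - y).
  by rewrite ler_wpM2r //; lra.
have expand : c * ((1 + `|s|) * (2 * (k * (x - y)))) =
   k * (x - y) * (2 * (c * (1 + `|s|)))  by ring.
have expand2 : k * (`|s| + 2 * (c * (1 + `|s|)) + 1) * (x - y) =
   `|s| * (k * (x - y)) + k * (x - y) * (2 * (c * (1 + `|s|))) + k * (x - y) by ring.
have expand3 : (t - s) / 2 * (x - y) = (t - s) * (x - y) / 2 by rewrite mulrAC.
have e1 : fy - (fx + s * (z - x)) = (fy - fx - s * (y - x)) + s * (y - z) by ring.
lra.
Qed.

Lemma spike_left (I : interval R) (f : R -> R) (c x a0 s t : R) :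
  0 < c -> {within [set y | y \in I], continuous f} ->
  (forall a y b, a \in I -> b \in I -> a < y < b ->
    `|f y - f a| <= c * (`|b - a| + `|f b - f a|) \/
    `|f y - f b| <= c * (`|b - a| + `|f b - f a|)) ->
  a0 \in I -> x \in I -> a0 < x -> s < t ->
  left_density_one [set y | y \in I /\ dquot f x y <= s] x ->
  exists2 d, 0 < d & forall y, y \in I -> x - d < y < x -> dquot f x y <= t.
Proof.
move=> c0 fc Sp aI xI ax st Hd.
apply: contrapT => Hn.
have [k [k0 k12 kK]] := @kchoice c s t c0 st.
pose P := fun d : R =>
  ((1 - k / 4)%:E < lebesgue_measure ([set y | y \in I /\ (dquot f x y <= s)%R] `&` `](x - d)%R, x[) * (d^-1)%:E)%E.
have hP : \forall d \near 0^'+, P d.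
  have hN : nbhs 1%E [set z : \bar R | ((1 - k / 4)%:E < z)%E].
    by apply: open_ereal_gt'; rewrite lte_fin; lra.
  exact: (Hd _ hN).
have [e0 e00 He] := near_right_ex (fun d => P d) hP.
pose d' := Num.min (e0 / 2) ((x - a0) / 2).
have d'0 : 0 < d' by rewrite /d' lt_min; apply/andP; split; lra.
have d'1 : d' <= e0 / 2 by rewrite /d' ge_min lexx.
have d'2 : d' <= (x - a0) / 2 by rewrite /d' ge_min lexx orbT.
have [y [yI xy yd ty]] : exists y, [/\ y \in I, x - d' < y, y < x & t < dquot f x y].
  apply: contrapT => hy; apply: Hn; exists d' => // y yI /andP[xy yd].
  rewrite leNgt; apply/negP => ty; apply: hy; by exists y.
have hq : f y - f x < t * (y - x).
  by move: ty; rewrite /dquot ltr_ndivlMr // subr_lt0.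
pose g z := - f z - - f x - - s * (z - x).
have gy : (t - s) * (x - y) < g y by rewrite /g; lra.
have ts0 : 0 < (t - s) * (x - y) by rewrite mulr_gt0 //; lra.
have kh0 : 0 < k * (x - y) by rewrite mulr_gt0 //; lra.
have kh : k * (x - y) <= (x - y) / 2.
  have : k * (x - y) <= 1 / 2 * (x - y) by rewrite ler_wpM2r //; lra.
  lra.
have Sg : forall z, [set y | y \in I /\ (dquot f x y <= s)%R] z -> z < x -> g z <= 0.
  move=> z [_ zs] xz; move: zs; rewrite /dquot ler_ndivrMr ?subr_lt0 // /g; lra.
have D0 : 0 < 2 * (x - y) by lra.
have De : 2 * (x - y) < e0 by lra.
have Db : a0 < y - k * (x - y) by lra.
have HP := He (2 * (x - y)) D0 De.
have hm : (lebesgue_measure ([set y | y \in I /\ (dquot f x y <= s)%R] `&` `](x - 2 * (x - y))%R, x[)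
            <= (x - (x - 2 * (x - y)) - k * (x - y))%:E)%E.
  apply: (@gap_meas _ g (x - 2 * (x - y)) x y (k * (x - y))) => //; [lra | lra | | ].
    by move=> z Sz _ zx; apply: Sg.
  have [HA|HA] := pselect (forall z, y - k * (x - y) <= z <= y -> 0 < g z); first by left.
  have [HB|HB] := pselect (forall z, y <= z <= y + k * (x - y) -> 0 < g z); first by right.
  exfalso.
  have ex1 : exists2 z, y - k * (x - y) <= z <= y & g z <= 0.
    apply: contrapT => H; apply: HA => z hz; rewrite ltNge; apply/negP => gz.
    by apply: H; exists z.
  have ex2 : exists2 z, y <= z <= y + k * (x - y) & g z <= 0.
    apply: contrapT => H; apply: HB => z hz; rewrite ltNge; apply/negP => gz.
    by apply: H; exists z.
  have [z1 [z2 [hz1 hz2 z1I z2I [gz1 gz2]]]] :=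
    @two_zeros I g a0 x y (k * (x - y)) (@gcont I (fun z => - f z) x (- s) (@contN _ f fc)) aI xI
      Db (ltac:(lra)) kh0 (lt_trans ts0 gy) ex1 ex2.
  have fz1 : f z1 = f x + s * (z1 - x) by move: gz1; rewrite /g => e; lra.
  have fz2 : f z2 = f x + s * (z2 - x) by move: gz2; rewrite /g => e; lra.
  have gyE : (t - s) * (x - y) < - (f y - f x - s * (y - x)) by move: gy; rewrite /g; lra.
  move: hz1 hz2 => /andP[z1a z1b] /andP[z2a z2b].
  case: (Sp z1 y z2 z1I z2I (ltac:(by rewrite z1b z2a))); rewrite fz1 fz2 => hsp.
  - apply: (@spike_arith_left c s t k x y z1 z1 z2 (f y) (f x)) => //.
    + by rewrite z1a z1b.
    + by rewrite z2a z2b.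
    + apply/andP; split; lra.
  - apply: (@spike_arith_left c s t k x y z2 z1 z2 (f y) (f x)) => //.
    + by rewrite z1a z1b.
    + by rewrite z2a z2b.
    + apply/andP; split; lra.
have hD : (0 <= ((2 * (x - y))^-1)%:E)%E by rewrite lee_fin invr_ge0 ltW.
have := lee_wpmul2r hD hm.
move: HP; rewrite /P => HP h2.
have := lt_le_trans HP h2; rewrite -EFinM lte_fin.
have -> : (x - (x - 2 * (x - y)) - k * (x - y)) * (2 * (x - y))^-1 = (2 - k) / 2.
  have yx : x - y != 0 by rewrite gt_eqF // subr_gt0.
  by field.
lra.
Qed.

Lemma dquotN (f : R -> R) (x y : R) : dquot (fun z => - f z) x y = - dquot f x y.
Proof. by rewrite /dquot -opprD mulNr. Qed.

Lemma main_lemma (I : interval R) (f : R -> R) :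
  nondegenerate_p41 I ->
  {within [set y | y \in I], continuous f} ->
  monotone_metric (graph_p41 I f) ->
  forall x : R, x \in I ->
    ((exists y, y \in I /\ x < y) ->
       ap_upper_right I f x = dini_upper_right I f x /\
       ap_lower_right I f x = dini_lower_right I f x) /\
    ((exists y, y \in I /\ y < x) ->
       ap_upper_left I f x = dini_upper_left I f x /\
       ap_lower_left I f x = dini_lower_left I f x).
Proof.
move=> _ fc mono x xI.
have [c c0 Sp] := @spike_of I f mono fc.
have fcn := @contN _ f fc.
have Spn : forall a y b, a \in I -> b \in I -> a < y < b ->
    `|- f y - - f a| <= c * (`|b - a| + `|- f b - - f a|) \/
    `|- f y - - f b| <= c * (`|b - a| + `|- f b - - f a|).
  move=> a y b aI bI ayb.
  by rewrite -!opprD !normrN; apply: Sp.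
split.
- move=> [b0 [bI xb]]; split.
  + rewrite /ap_upper_right /dini_upper_right.
    apply: (apU (fun d => [set y | y \in I /\ x < y < x + d]) (dquot f x)).
    * move=> t [d d0 H].
      apply: (@dens_right I x b0 (fun y => dquot f x y <= t) bI xI xb).
      by exists d => // y yI hy; apply: H.
    * move=> s Ps t st.
      have [d d0 H] := @spike_right I f c x b0 s t c0 fc Sp bI xI xb st Ps.
      by exists d => // y [yI hy]; apply: H.
  + rewrite /ap_lower_right /dini_lower_right.
    apply: (apL (fun d => [set y | y \in I /\ x < y < x + d]) (dquot f x)).
    * move=> t [d d0 H].
      apply: (@dens_right I x b0 (fun y => t <= dquot f x y) bI xI xb).
      by exists d => // y yI hy; apply: H.
    * move=> s Ps t ts.
      have Ps' : right_density_one [set y | y \in I /\ dquot (fun z => - f z) x y <= - s] x.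
        have -> : [set y | y \in I /\ dquot (fun z => - f z) x y <= - s] =
                  [set y | y \in I /\ s <= dquot f x y].
          by apply/seteqP; split => y /= [yI h]; split => //; move: h; rewrite dquotN lerN2.
        exact: Ps.
      have [d d0 H] := @spike_right I (fun z => - f z) c x b0 (- s) (- t) c0 fcn Spn bI xI xb
         (ltac:(by rewrite ltrN2)) Ps'.
      exists d => // y [yI hy].
      by have := H y yI hy; rewrite dquotN lerN2.
- move=> [a0 [aI ax]]; split.
  + rewrite /ap_upper_left /dini_upper_left.
    apply: (apU (fun d => [set y | y \in I /\ x - d < y < x]) (dquot f x)).
    * move=> t [d d0 H].
      apply: (@dens_left I x a0 (fun y => dquot f x y <= t) aI xI ax).
      by exists d => // y yI hy; apply: H.
    * move=> s Ps t st.
      have [d d0 H] := @spike_left I f c x a0 s t c0 fc Sp aI xI ax st Ps.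
      by exists d => // y [yI hy]; apply: H.
  + rewrite /ap_lower_left /dini_lower_left.
    apply: (apL (fun d => [set y | y \in I /\ x - d < y < x]) (dquot f x)).
    * move=> t [d d0 H].
      apply: (@dens_left I x a0 (fun y => t <= dquot f x y) aI xI ax).
      by exists d => // y yI hy; apply: H.
    * move=> s Ps t ts.
      have Ps' : left_density_one [set y | y \in I /\ dquot (fun z => - f z) x y <= - s] x.
        have -> : [set y | y \in I /\ dquot (fun z => - f z) x y <= - s] =
                  [set y | y \in I /\ s <= dquot f x y].
          by apply/seteqP; split => y /= [yI h]; split => //; move: h; rewrite dquotN lerN2.
        exact: Ps.
      have [d d0 H] := @spike_left I (fun z => - f z) c x a0 (- s) (- t) c0 fcn Spn aI xI ax
         (ltac:(by rewrite ltrN2)) Ps'.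
      exists d => // y [yI hy].
      by have := H y yI hy; rewrite dquotN lerN2.
Qed.
End S.

Theorem proposition4p1 (R : realType) (I : interval R) (f : R -> R) :
  nondegenerate_p41 I ->
  {within [set y | y \in I], continuous f} ->
  monotone_metric (graph_p41 I f) ->
  forall x : R, x \in I ->
    ((exists y, y \in I /\ x < y) ->
       ap_upper_right I f x = dini_upper_right I f x /\
       ap_lower_right I f x = dini_lower_right I f x) /\
    ((exists y, y \in I /\ y < x) ->
       ap_upper_left I f x = dini_upper_left I f x /\
       ap_lower_left I f x = dini_lower_left I f x).
Proof. exact: main_lemma. Qed.
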